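(* For every positive integer $n$, $$\operatorname{lcm}\left({n\brack 0}_q,{n\brack 1}_q,\ldots,{n\brack n}_q\right)=\prod_{\substack{1\le d\le n\\ d\nmid (n+1)}}\Phi_d(q)=\frac{\operatorname{lcm}([1]_q,\ldots,[n+1]_q)}{[n+1]_q}.$$ *)

(* Defs.v *)
From HB Require Import structures.
From mathcomp Require Import all_boot all_order all_algebra all_field.
Set Implicit Arguments. Unset Strict Implicit. Unset Printing Implicit Defensive.
Import Order.TTheory GRing.Theory Num.Theory.
Local Open Scope ring_scope.

Definition qint (k : nat) : {poly rat} := \sum_(i < k) 'X^i.

Definition qfact (n : nat) : {poly rat} := \prod_(1 <= i < n.+1) qint i.

Definition qbinom (n k : nat) : {poly rat} :=
  if (k <= n)%N then qfact n %/ (qfact k * qfact (n - k)) else 0.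

Definition lcmp (p q : {poly rat}) : {poly rat} :=
  let l := (p * q) %/ gcdp p q in (lead_coef l)^-1 *: l.

Definition lcm_seq (s : seq {poly rat}) : {poly rat} := foldr lcmp 1 s.

Definition PhiQ (d : nat) : {poly rat} := map_poly (intr : int -> rat) ('Phi_d).

(* Main.v *)
Require Import Defs.
From HB Require Import structures.
From mathcomp Require Import all_boot all_order all_algebra all_field.
From Stdlib Require Import Lia.
Import Order.TTheory GRing.Theory Num.Theory.
Local Open Scope ring_scope.

Lemma lcmp_monic0 (p q : {poly rat}) : lcmp p q = 0 \/ lcmp p q \is monic.
Proof.
rewrite /lcmp; set l := _ %/ _; have [->|nz] := eqVneq l 0.
  by left; rewrite scaler0.
by right; rewrite monicE lead_coefZ mulVf // lead_coef_eq0.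
Qed.

Lemma dvdp_lcmpZ (p q r : {poly rat}) :
  (lcmp p q %| r) = ((p * q) %/ gcdp p q %| r).
Proof.
rewrite /lcmp; set l := _ %/ _; have [->|nz] := eqVneq l 0.
  by rewrite scaler0.
by rewrite dvdpZl // invr_eq0 lead_coef_eq0.
Qed.

Lemma dvdp_lcmpl (p q : {poly rat}) : p %| lcmp p q.
Proof.
rewrite /lcmp; set c := _^-1; have [->|nz] := eqVneq c 0.
  by rewrite scale0r dvdp0.
by rewrite dvdpZr // -divp_mulA ?dvdp_gcdr // dvdp_mulr.
Qed.

Lemma dvdp_lcmpr (p q : {poly rat}) : q %| lcmp p q.
Proof.
rewrite /lcmp; set c := _^-1; have [->|nz] := eqVneq c 0.
  by rewrite scale0r dvdp0.
by rewrite dvdpZr // mulrC -divp_mulA ?dvdp_gcdl // dvdp_mulr.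
Qed.

Lemma dvdp_lcmp (p q r : {poly rat}) : p %| r -> q %| r -> lcmp p q %| r.
Proof.
move=> pr qr; rewrite dvdp_lcmpZ.
have [p0|pn0] := eqVneq p 0.
  by move: pr; rewrite p0 mul0r div0p.
have [q0|qn0] := eqVneq q 0.
  by move: qr; rewrite q0 mulr0 div0p.
set g := gcdp p q.
have gn0 : g != 0 by rewrite gcdp_eq0 negb_and pn0.
rewrite -divp_mulA ?dvdp_gcdr //.
have cop : coprimep (q %/ g) (p %/ g).
  by rewrite coprimep_sym coprimep_div_gcd // pn0.
have /eqP Dr : r == r %/ p * p by rewrite -dvdp_eq.
set u := r %/ p in Dr *.
rewrite Dr mulrC dvdp_mul2r //.
have Dp : p = p %/ g * g by apply/eqP; rewrite -dvdp_eq dvdp_gcdl.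
have Dq : q = q %/ g * g by apply/eqP; rewrite -dvdp_eq dvdp_gcdr.
rewrite Dr Dq Dp mulrA dvdp_mul2r // in qr.
by move: qr; rewrite mulrC (Gauss_dvdpr _ cop).
Qed.

Lemma lcm_seq_dvd (s : seq {poly rat}) x : x \in s -> x %| lcm_seq s.
Proof.
elim: s => //= a s IH; rewrite inE => /orP[/eqP->|xs].
  exact: dvdp_lcmpl.
exact: dvdp_trans (IH xs) (dvdp_lcmpr _ _).
Qed.

Lemma lcm_seq_least (s : seq {poly rat}) (r : {poly rat}) :
  (forall x, x \in s -> x %| r) -> lcm_seq s %| r.
Proof.
elim: s => /= [_|a s IH H]; first exact: dvd1p.
apply: dvdp_lcmp; first by apply: H; rewrite inE eqxx.
by apply: IH => x xs; apply: H; rewrite inE xs orbT.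
Qed.

Lemma lcm_seq_monic0 (s : seq {poly rat}) : lcm_seq s = 0 \/ lcm_seq s \is monic.
Proof. case: s => [|a s] /=; [right; exact: monic1 | exact: lcmp_monic0]. Qed.

Lemma lcm_char (s : seq {poly rat}) R : R \is monic ->
  (forall x, x \in s -> x %| R) -> R %| lcm_seq s -> lcm_seq s = R.
Proof.
move=> mR H1 H2; have H3 := @lcm_seq_least s R H1.
case: (lcm_seq_monic0 s) => [L0|mL].
  by move: H3; rewrite L0 dvd0p => /eqP R0; move: mR; rewrite R0 monicE lead_coef0 eq_sym oner_eq0.
by apply/eqP; rewrite -eqp_monic // /eqp H3 H2.
Qed.

Lemma PhiQ_monic d : PhiQ d \is monic.
Proof. exact: monic_map (Cyclotomic_monic d). Qed.

Lemma PhiQ_neq0 d : PhiQ d != 0.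
Proof. exact: monic_neq0 (PhiQ_monic d). Qed.

Lemma prodQ_div (N : nat) : (0 < N)%N ->
  \prod_(d <- divisors N) PhiQ d = 'X^N - 1.
Proof.
move=> N0; have := congr1 (map_poly (intr : int -> rat)) (prod_Cyclotomic N0).
rewrite rmorph_prod rmorphB rmorph1 rmorphXn /= map_polyX; exact.
Qed.

Lemma divisors_range (F : nat -> {poly rat}) N : (0 < N)%N ->
  \prod_(d <- divisors N) F d = \prod_(1 <= d < N.+1 | (d %| N)%N) F d.
Proof.
move=> N0; rewrite -[RHS]big_filter; apply: perm_big; apply: uniq_perm.
- exact: divisors_uniq.
- by rewrite filter_uniq // iota_uniq.
move=> d; rewrite mem_filter mem_index_iota -dvdn_divisors //.
case dN: (d %| N)%N; rewrite ?andbF // ?andbT ltnS (dvdn_leq N0 dN) andbT.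
by case: d dN => //; rewrite dvd0n => /eqP N00; move: N0; rewrite N00.
Qed.

Lemma prodQ (N : nat) : (0 < N)%N ->
  \prod_(1 <= d < N.+1 | (d %| N)%N) PhiQ d = 'X^N - 1.
Proof. by move=> N0; rewrite -divisors_range // prodQ_div. Qed.

Lemma PhiQ1 : PhiQ 1 = 'X - 1.
Proof.
have := @prodQ 1 (ltn0Sn 0); rewrite big_mkcond big_nat1 /= expr1 => <-.
by [].
Qed.

Lemma qint_prod k : (0 < k)%N ->
  qint k = \prod_(2 <= d < k.+1 | (d %| k)%N) PhiQ d.
Proof.
move=> k0; have := @prodQ k k0; rewrite big_ltn_cond // dvd1n PhiQ1 /=.
rewrite subrX1 => H; apply: (mulfI (monic_neq0 (monicXsubC 1))).
by rewrite polyC1 H.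
Qed.

Definition Fe (B : nat) (e : nat -> nat) : {poly rat} :=
  \prod_(2 <= d < B) PhiQ d ^+ e d.

Lemma Fe_monic B e : Fe B e \is monic.
Proof. by apply: monic_prod => d _; apply: monic_exp; apply: PhiQ_monic. Qed.

Lemma Fe_neq0 B e : Fe B e != 0.
Proof. exact: monic_neq0 (Fe_monic B e). Qed.

Lemma Fe_bool B (P : pred nat) :
  \prod_(2 <= d < B | P d) PhiQ d = Fe B (fun d => P d).
Proof. by rewrite big_mkcond /Fe; apply: eq_bigr => d _; case: (P d). Qed.

Lemma Fe_mul B e f : Fe B e * Fe B f = Fe B (fun d => e d + f d)%N.
Proof. by rewrite /Fe -big_split; apply: eq_bigr => d _; rewrite exprD. Qed.

Lemma Fe_dvd B e f : (forall d, (2 <= d < B)%N -> (e d <= f d)%N) ->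
  Fe B e %| Fe B f.
Proof.
move=> H; rewrite /Fe big_seq_cond [X in _ %| X]big_seq_cond.
apply: (big_ind2 (fun x y => x %| y)) => //.
- by move=> x1 x2 y1 y2; apply: dvdp_mul.
move=> d /andP[dI _]; apply: dvdp_exp2l; apply: H.
by rewrite mem_index_iota in dI.
Qed.

Lemma Q_dvd_Fe B e d : (2 <= d < B)%N -> (0 < e d)%N -> PhiQ d %| Fe B e.
Proof.
move=> dB ed; rewrite /Fe (bigD1_seq d) ?mem_index_iota ?iota_uniq //=.
apply: dvdp_mulr; rewrite -{1}(expr1 (PhiQ d)); exact: dvdp_exp2l.
Qed.

Lemma qint_Fe k B : (0 < k)%N -> (k < B)%N -> qint k = Fe B (fun d => d %| k)%N.
Proof.
move=> k0 kB; rewrite qint_prod // -Fe_bool.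
rewrite (@big_cat_nat _ _ _ k.+1 2 B) /= ?ltnS //.
rewrite [X in _ * X]big1_seq ?mulr1 // => d /andP[dk].
rewrite mem_index_iota => /andP[kd _].
by rewrite gtnNdvd in dk.
Qed.

Lemma qfact_Fe m B : (m < B)%N -> qfact m = Fe B (fun d => m %/ d)%N.
Proof.
elim: m => [_|m IH mB].
  rewrite /qfact big_geq // /Fe big1 // => d _; by rewrite div0n expr0.
rewrite /qfact big_nat_recr //= -/(qfact m) IH ?(ltnW mB) //.
rewrite (@qint_Fe m.+1 B) // Fe_mul /Fe big_seq [RHS]big_seq.
apply: eq_bigr => d; rewrite mem_index_iota => /andP[d2 _].
by rewrite divnS ?(leq_trans _ d2) // addnC.
Qed.

Lemma qbinom_Fe n k : (k <= n)%N ->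
  qbinom n k = Fe n.+2 (fun d => d <= k %% d + (n - k) %% d)%N.
Proof.
move=> kn; rewrite /qbinom kn (@qfact_Fe n n.+2) // (@qfact_Fe k n.+2) ?ltnS ?(leq_trans kn) //.
rewrite (@qfact_Fe (n - k) n.+2) ?ltnS ?leq_subr ?(leq_trans (leq_subr _ _)) //.
rewrite Fe_mul.
have -> : Fe n.+2 (fun d => n %/ d)%N =
   Fe n.+2 (fun d => d <= k %% d + (n - k) %% d)%N * Fe n.+2 (fun d => k %/ d + (n - k) %/ d)%N.
  rewrite Fe_mul /Fe big_seq [RHS]big_seq.
  apply: eq_bigr => d; rewrite mem_index_iota => /andP[d2 _].
  by rewrite -{1}(subnKC kn) divnD ?(leq_trans _ d2) // addnC.
by rewrite mulpK // Fe_neq0.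
Qed.

Lemma Xn1_coprime N : (0 < N)%N -> coprimep ('X^N - 1 : {poly rat}) 'X^(N.-1).
Proof.
move=> N0; apply/Bezout_eq1_coprimepP; exists (-1, 'X) => /=.
by rewrite -exprS prednK // mulN1r opprB subrK.
Qed.

Lemma PhiQ_coprime d e : (0 < d)%N -> (0 < e)%N -> d != e ->
  coprimep (PhiQ d) (PhiQ e).
Proof.
move=> d0 e0 de; set N := (d * e)%N.
have N0 : (0 < N)%N by rewrite muln_gt0 d0.
have H : PhiQ d * PhiQ e %| 'X^N - 1.
  rewrite -(@prodQ_div N N0) (bigD1_seq d) ?divisors_uniq -?dvdn_divisors ?dvdn_mulr //=.
  rewrite -big_filter (bigD1_seq e) /=.
  - by rewrite mulrA dvdp_mulr.
  - by rewrite mem_filter eq_sym de -dvdn_divisors ?dvdn_mull.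
  by rewrite filter_uniq ?divisors_uniq.
apply/coprimepP => g gd ge.
have g2 : g * g %| 'X^N - 1 := dvdp_trans (dvdp_mul gd ge) H.
have gf : g %| 'X^N - 1 := dvdp_trans (dvdp_mulr _ (dvdpp g)) g2.
have gf' : g %| ('X^N - 1)^`().
  move: g2; rewrite dvdp_eq => /eqP ->.
  rewrite derivM derivM; apply: dvdp_add; first exact: dvdp_mull (dvdp_mulr _ (dvdpp g)).
  exact: dvdp_mull (dvdp_add (dvdp_mull _ (dvdpp g)) (dvdp_mulr _ (dvdpp g))).
have gX : g %| 'X^(N.-1).
  move: gf'; rewrite derivB derivXn -polyC1 derivC subr0 -scaler_nat dvdpZr //.
  by rewrite pnatr_eq0 -lt0n.
by have /coprimepP := @Xn1_coprime N N0; apply.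
Qed.

Lemma exp_div_case n k d : (0 < d)%N -> (d %| n.+1)%N -> (k <= n)%N ->
  ~~ (d <= k %% d + (n - k) %% d)%N.
Proof.
move=> d0 dn kn; set a := (k %% d)%N; set b := ((n - k) %% d)%N.
have ad : (a < d)%N by rewrite ltn_pmod.
have bd : (b < d)%N by rewrite ltn_pmod.
have Dn : n.+1 = ((k %/ d + (n - k) %/ d) * d + (a + b + 1))%N.
  have Hk := divn_eq k d; have Hnk := divn_eq (n - k) d.
  rewrite mulnDl; move/ssrnat.leP: kn => kn'.
  rewrite -/a -/b in Hk Hnk.
  rewrite -?plusE -?multE -?minusE in Hk Hnk *; lia.
have : (d %| a + b + 1)%N by rewrite -(dvdn_addr (a + b + 1) (dvdn_mull (k %/ d + (n - k) %/ d) (dvdnn d))) -Dn.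
case/dvdnP=> q Dq; apply/negP => /ssrnat.leP H.
move/ssrnat.ltP: ad => ad; move/ssrnat.ltP: bd => bd.
case: q Dq => [|[|q]] Dq; rewrite ?mulSn ?mul0n in Dq; clearbody a b; clear Dn dn; rewrite -?plusE -?multE in Dq H; lia.
Qed.

Lemma exp_exists n d : (2 <= d)%N -> (d <= n)%N -> ~~ (d %| n.+1)%N ->
  (d <= d.-1 %% d + (n - d.-1) %% d)%N.
Proof.
move=> d2 dn ndv.
have d0 : (0 < d)%N by apply: leq_trans d2.
rewrite modn_small ?prednK ?leqnn //.
have : ((n - d.-1) %% d != 0)%N.
  apply: contra ndv => /eqP H.
  have -> : n.+1 = (n - d.-1 + d)%N.
    move/ssrnat.leP: dn => dn; move/ssrnat.leP: d2 => d2'.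
    rewrite -?plusE -?minusE; lia.
  by rewrite dvdn_add // /dvdn H.
move: (n - d.-1 %% d)%N => _.
case: ((n - d.-1) %% d)%N => // m _.
by rewrite addnS -addSn prednK // leq_addr.
Qed.

Lemma prod_coprime_dvd (r : seq nat) (P : pred nat) (p : {poly rat}) :
  uniq r -> (forall i, i \in r -> (0 < i)%N) ->
  (forall i, i \in r -> P i -> PhiQ i %| p) ->
  \prod_(i <- r | P i) PhiQ i %| p.
Proof.
elim: r => [_ _ _|a r IH]; first by rewrite big_nil dvd1p.
move=> /= /andP[ar ur] pos H; rewrite big_cons.
have IH' : \prod_(i <- r | P i) PhiQ i %| p.
  apply: IH => // [i ir|i ir]; [apply: pos | apply: H]; by rewrite inE ir orbT.
case Pa: (P a) => //.
have cop : coprimep (PhiQ a) (\prod_(i <- r | P i) PhiQ i).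
  rewrite big_seq_cond; apply: (big_ind (fun x => coprimep (PhiQ a) x)).
  - exact: coprimep1.
  - by move=> x y cx cy; rewrite coprimepMr cx cy.
  move=> i /andP[ir _]; apply: PhiQ_coprime.
  + by apply: pos; rewrite inE eqxx.
  + by apply: pos; rewrite inE ir orbT.
  by apply: contraNneq ar => ->.
by rewrite Gauss_dvdp // IH' andbT; apply: H; rewrite ?inE ?eqxx.
Qed.

Theorem mainTheorem2 (n : nat) (hn : (0 < n)%N) :
  lcm_seq [seq qbinom n k | k <- iota 0 n.+1]
    = \prod_(1 <= d < n.+1 | ~~ (d %| n.+1)%N) PhiQ d
  /\ \prod_(1 <= d < n.+1 | ~~ (d %| n.+1)%N) PhiQ d
    = lcm_seq [seq qint k | k <- iota 1 n.+1] %/ qint n.+1.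
Proof.
set R := \prod_(2 <= d < n.+2 | ~~ (d %| n.+1)%N) PhiQ d.
have E1 : \prod_(1 <= d < n.+1 | ~~ (d %| n.+1)%N) PhiQ d = R.
  rewrite big_ltn_cond // dvd1n /= /R (@big_cat_nat _ _ _ n.+1 2 n.+2) //=.
  by rewrite [X in _ * X]big_mkcond big_nat1 dvdnn /= mulr1.
have mR : R \is monic by apply: monic_prod => d _; apply: PhiQ_monic.
have L1 : lcm_seq [seq qbinom n k | k <- iota 0 n.+1] = R.
  apply: lcm_char => //.
    move=> x /mapP[k]; rewrite mem_iota add0n ltnS => /andP[_ kn] ->.
    rewrite qbinom_Fe // /R Fe_bool; apply: Fe_dvd => d /andP[d2 _].
    have d0 : (0 < d)%N by apply: leq_trans d2.
    case: (boolP (d %| n.+1)%N) => h.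
      by rewrite (negbTE (@exp_div_case n k d d0 h kn)).
    exact: leq_b1.
  rewrite /R; apply: prod_coprime_dvd.
  - exact: iota_uniq.
  - by move=> i; rewrite mem_index_iota => /andP[i2 _]; apply: leq_trans i2.
  move=> d; rewrite mem_index_iota => /andP[d2 dB] ndv.
  have dn : (d <= n)%N.
    move: dB; rewrite ltnS leq_eqVlt => /orP[/eqP dE|//].
    by move: ndv; rewrite dE dvdnn.
  apply: (@dvdp_trans _ (qbinom n d.-1)); last first.
    apply: lcm_seq_dvd; apply: map_f; rewrite mem_iota add0n ltnS.
    by rewrite (leq_trans (leq_pred d) dn).
  rewrite qbinom_Fe ?(leq_trans (leq_pred d) dn) //.
  apply: Q_dvd_Fe; first by rewrite d2 ltnS (leq_trans dn).
  by rewrite (@exp_exists n d d2 dn ndv).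
have L2 : lcm_seq [seq qint k | k <- iota 1 n.+1] = \prod_(2 <= d < n.+2) PhiQ d.
  apply: lcm_char.
  - by apply: monic_prod => d _; apply: PhiQ_monic.
  - move=> x /mapP[k]; rewrite mem_iota => /andP[k1 kn] ->.
    rewrite (@qint_Fe k n.+2) // -[X in _ %| X](Fe_bool n.+2 predT).
    rewrite (Fe_bool n.+2 predT); by apply: Fe_dvd => d _; apply: leq_b1.
  apply: (@prod_coprime_dvd _ predT).
  - exact: iota_uniq.
  - by move=> i; rewrite mem_index_iota => /andP[i2 _]; apply: leq_trans i2.
  move=> d; rewrite mem_index_iota => /andP[d2 dB] _.
  have d0 : (0 < d)%N by apply: leq_trans d2.
  apply: (@dvdp_trans _ (qint d)); last first.
    by apply: lcm_seq_dvd; apply: map_f; rewrite mem_iota d0 add1n.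
  rewrite (@qint_Fe d n.+2) //; apply: Q_dvd_Fe; first by rewrite d2.
  by rewrite dvdnn.
split; first by rewrite L1 E1.
rewrite E1 L2 (bigID (fun d => d %| n.+1)%N) /= -qint_prod //.
rewrite mulKp //; rewrite qint_prod //.
by apply: monic_neq0; apply: monic_prod => d _; apply: PhiQ_monic.
Qed.
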